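(* Let $\mathbb{K}$ be a totally ordered field which is non-Archimedean and Cantor $\kappa$-complete for a cardinal $\kappa$. Then $\kappa\le\mathrm{card}(\mathbb{K})$.
   Context: For a cardinal $\kappa$, $\mathbb{K}$ is Cantor $\kappa$-complete if every family of fewer than $\kappa$ closed bounded intervals in $\mathbb{K}$ with the finite intersection property has non-empty intersection. Archimedean: for every $x$ there is $n\in\mathbb{N}$ with $|x|<n$. *)

(* Defs.v *)
(* a totally ordered field is a [realFieldType]. *)
From Stdlib Require List.
From HB Require Import structures.
From mathcomp Require Import all_boot all_order all_algebra.
Set Implicit Arguments. Unset Strict Implicit. Unset Printing Implicit Defensive.
Import Order.TTheory GRing.Theory Num.Theory.
Local Open Scope ring_scope.

(* Cardinals are represented by types; |A| <= |B| iff there is an injection. *)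
Definition card_le (A B : Type) : Prop := exists f : A -> B, injective f.
Definition card_lt (A B : Type) : Prop := card_le A B /\ ~ card_le B A.

Definition archimedean_field (K : realFieldType) : Prop :=
  forall x : K, exists n : nat, `|x| < n%:R.

Definition in_interval (K : realFieldType) (a b x : K) : Prop := a <= x /\ x <= b.

Definition fip (K : realFieldType) (I : Type) (a b : I -> K) : Prop :=
  forall s : list I, exists x : K, forall i, List.In i s -> in_interval (a i) (b i) x.

Definition cantor_complete (K : realFieldType) (kappa : Type) : Prop :=
  forall (I : Type) (a b : I -> K),
    card_lt I kappa ->
    (forall i, a i <= b i) ->
    fip a b ->
    exists x : K, forall i, in_interval (a i) (b i) x.

(* Main.v *)
Require Import Defs.
From mathcomp Require Import all_boot all_order all_algebra.
From Stdlib Require Import Classical ClassicalEpsilon FunctionalExtensionality PropExtensionality.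

Lemma dec (P : Prop) : {P} + {~ P}.
Proof.
  destruct (constructive_indefinite_description (fun b : bool => if b then P else ~ P)) as [[|] H].
  - destruct (classic P) as [p|p]; [exists true|exists false]; exact p.
  - left; exact H.
  - right; exact H.
Defined.

Section Comp.
Variables A B : Type.
Definition rel := A -> B -> Prop.
Definition sub (R S : rel) := forall a b, R a b -> S a b.
Definition PI (R : rel) := (forall a b b', R a b -> R a b' -> b = b') /\
  (forall a a' b, R a b -> R a' b -> a = a').
Definition free (R : rel) (p : A * B) := (~ exists b, R (fst p) b) /\ (~ exists a, R a (snd p)).
Definition ext (R : rel) : rel :=
  match dec (exists p, free R p) with
  | left H => let p := proj1_sig (constructive_indefinite_description _ H) in
      fun a b => R a b \/ (a = fst p /\ b = snd p)
  | right _ => R end.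
Definition union (C : rel -> Prop) : rel := fun a b => exists R, C R /\ R a b.

Inductive T : rel -> Prop :=
| T_ext R : T R -> T (ext R)
| T_sup (C : rel -> Prop) : (forall R, C R -> T R) -> T (union C).

Lemma ext_infl R : sub R (ext R).
Proof. unfold ext, sub; intros a b H. destruct (dec _); simpl; auto. Qed.

Lemma sub_eq R S : sub R S -> sub S R -> R = S.
Proof.
  intros H1 H2; apply functional_extensionality; intro a;
  apply functional_extensionality; intro b; apply propositional_extensionality; split; auto.
Qed.

Definition extreme c := forall x, T x -> sub x c -> ~ sub c x -> sub (ext x) c.

Lemma lemma1 c : extreme c -> forall x, T x -> sub x c \/ sub (ext c) x.
Proof.
  intros Hc x Hx; induction Hx as [x Hx IH | C HC IH].
  - destruct IH as [H|H].
    + destruct (classic (sub c x)) as [H'|H'].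
      * right. rewrite (sub_eq _ _ H H'). intros a b; auto.
      * left. apply Hc; auto.
    + right. intros a b h. apply ext_infl. auto.
  - destruct (classic (exists y, C y /\ ~ sub y c)) as [[y [Cy Hy]]|Hn].
    + right. destruct (IH y Cy) as [h|h]; [contradiction|].
      intros a b hab. exists y; split; auto.
    + left. intros a b [y [Cy hy]].
      destruct (classic (sub y c)) as [h|h]; [auto|].
      exfalso; apply Hn; eauto.
Qed.

Lemma lemma2 c : T c -> extreme c.
Proof.
  intro Hc; induction Hc as [c Hc IH | C HC IH].
  - intros x Hx H1 H2.
    destruct (lemma1 c IH x Hx) as [h|h]; [|contradiction]. cbv zeta in h.
    destruct (classic (sub c x)) as [h'|h'].
    + rewrite (sub_eq _ _ h h'); intros a b; auto.
    + intros a b hab. apply ext_infl. apply (IH x Hx h h'); auto.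
  - intros x Hx H1 H2.
    destruct (classic (exists y, C y /\ ~ sub y x)) as [[y [Cy Hy]]|Hn].
    + destruct (lemma1 y (IH y Cy) x Hx) as [h|h].
      * intros a b hab. exists y; split; auto. apply (IH y Cy x Hx h Hy); auto.
      * exfalso; apply Hy. intros a b hab; apply h, ext_infl; auto.
    + exfalso; apply H2. intros a b [y [Cy hy]].
      destruct (classic (sub y x)) as [h|h]; [auto|].
      exfalso; apply Hn; eauto.
Qed.

Lemma chain x y : T x -> T y -> sub x y \/ sub y x.
Proof.
  intros Hx Hy. destruct (lemma1 y (lemma2 y Hy) x Hx) as [h|h]; auto.
  right; intros a b hab; apply h, ext_infl; auto.
Qed.

Lemma T_PI R : T R -> PI R.
Proof.
  intro H; induction H as [R HR IH | C HC IH].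
  - unfold ext. destruct (dec _) as [e|e]; [|auto]. cbv zeta.
    destruct (constructive_indefinite_description _ e) as [[p q] [F1 F2]]; simpl in *.
    destruct IH as [I1 I2]; split.
    + intros a b b' [h|[? ?]] [h'|[? ?]]; subst; eauto;
        exfalso; apply F1; eauto.
    + intros a a' b [h|[? ?]] [h'|[? ?]]; subst; eauto;
        exfalso; apply F2; eauto.
  - split.
    + intros a b b' [R [CR h]] [R' [CR' h']].
      destruct (chain R R' (HC R CR) (HC R' CR')) as [s|s].
      * apply (proj1 (IH R' CR') a); auto.
      * apply (proj1 (IH R CR) a); auto.
    + intros a a' b [R [CR h]] [R' [CR' h']].
      destruct (chain R R' (HC R CR) (HC R' CR')) as [s|s].
      * apply (proj2 (IH R' CR') _ _ b); auto.
      * apply (proj2 (IH R CR) _ _ b); auto.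
Qed.

Lemma comparable : (exists f : A -> B, forall x y, f x = f y -> x = y) \/
                   (exists g : B -> A, forall x y, g x = g y -> x = y).
Proof.
  pose (M := union T).
  assert (HM : T M) by (apply T_sup; auto).
  assert (Hmax : sub (ext M) M).
  { intros a b h. exists (ext M); split; auto. apply T_ext; auto. }
  destruct (T_PI M HM) as [I1 I2].
  assert (Hnf : ~ exists p, free M p).
  { intros e. assert (h := Hmax). unfold ext in h. destruct (dec _) as [e'|e']; [|contradiction]. cbv zeta in h.
    destruct (constructive_indefinite_description _ e') as [[p q] [F1 F2]]; simpl in *.
    apply F1. exists q. apply h. right; auto. }
  destruct (classic (forall a, exists b, M a b)) as [Hd|Hd].
  - left. exists (fun a => proj1_sig (constructive_indefinite_description _ (Hd a))).
    intros x y.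
    destruct (constructive_indefinite_description _ (Hd x)) as [bx hx].
    destruct (constructive_indefinite_description _ (Hd y)) as [by' hy]; simpl.
    intros ->. eauto.
  - apply not_all_ex_not in Hd. destruct Hd as [a0 Ha0].
    assert (Hr : forall b, exists a, M a b).
    { intro b. apply NNPP; intro hb. apply Hnf. exists (a0, b); split; auto. }
    right. exists (fun b => proj1_sig (constructive_indefinite_description _ (Hr b))).
    intros x y.
    destruct (constructive_indefinite_description _ (Hr x)) as [ax hx].
    destruct (constructive_indefinite_description _ (Hr y)) as [ay hy]; simpl.
    intros ->. eauto.
Qed.
End Comp.

Import Order.TTheory GRing.Theory Num.Theory.
Local Open Scope ring_scope.

Set Implicit Arguments.
Section Alg.
Variable K : realFieldType.
Definition inf (x : K) := forall n : nat, n%:R <= `|x|.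

Lemma notinf (x : K) : ~ inf x -> exists n : nat, `|x| < n%:R.
Proof.
  intro h. apply NNPP; intro h'. apply h; intro n.
  rewrite leNgt; apply/negP => hn. apply h'; eauto.
Qed.

Lemma nat_notinf (n : nat) : ~ inf (n%:R : K).
Proof.
  intro h. have := h n.+1. rewrite ger0_norm ?ler0n // ler_nat ltnn. by [].
Qed.

Variable H : K.
Hypothesis HH : inf H.

Definition fa (t : K) : K := if dec (inf t) then 0 else `|t|.
Definition fb (t : K) : K := if dec (inf t) then `|t| else `|H|.

Lemma fab t : fa t <= fb t.
Proof.
  rewrite /fa /fb; case: (dec (inf t)) => h; first exact: normr_ge0.
  have [n hn] := notinf h. exact: (le_trans (ltW hn) (HH n)).
Qed.

Lemma fip_lem (s : list K) : exists x : K, (forall n : nat, n%:R <= x) /\ x <= `|H| /\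
   forall t, List.In t s -> inf t -> x <= `|t|.
Proof.
  elim: s => [|t s IH].
  - exists `|H|; split; first exact: HH.
    split; first exact: lexx.
    move=> t [].
  - case: IH => x [h1 [h2 h3]]. case: (dec (inf t)) => ht.
    + exists (Order.min `|t| x); split; [|split].
      * move=> n. rewrite le_min. apply/andP; split; [exact: ht|exact: h1].
      * rewrite ge_min h2 orbT //.
      * move=> u [<-|hu] hu'; rewrite ge_min ?lexx //.
        by rewrite (h3 u hu hu') orbT.
    + exists x; split; [exact h1|split; [exact h2|]].
      move=> u [<-|hu] hu'; [contradiction|exact: h3].
Qed.

Lemma fam_fip : fip fa fb.
Proof.
  move=> s. have [x [h1 [h2 h3]]] := fip_lem s. exists x => i hi.
  rewrite /in_interval /fa /fb; case: (dec (inf i)) => h; split.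
  - exact: (h1 0%N).
  - exact: h3.
  - have [n hn] := notinf h. exact: (le_trans (ltW hn) (h1 n)).
  - exact: h2.
Qed.

Lemma fam_empty : ~ exists x : K, forall i, in_interval (fa i) (fb i) x.
Proof.
  move=> [x hx].
  have hn : forall n : nat, n%:R <= x.
  { move=> n. have := hx n%:R. rewrite /in_interval /fa.
    case: (dec (inf n%:R)) => h; first by have := @nat_notinf n h.
    by rewrite ger0_norm ?ler0n // => -[]. }
  have x0 : 0 < x by apply: (lt_le_trans _ (hn 1%N)); rewrite ltr01.
  have hi : inf (x / 2).
  { move=> n. rewrite ger0_norm; last by rewrite divr_ge0 // ltW.
    rewrite ler_pdivlMr ?ltr0n // -natrM. exact: hn. }
  have := hx (x / 2). rewrite /in_interval /fb. case: (dec (inf (x/2))) => h; last by [].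
  rewrite ger0_norm; last by rewrite divr_ge0 // ltW.
  move=> [_ hle]. move: hle. rewrite ler_pdivlMr ?ltr0n // mulr_natr mulr2n.
  rewrite -subr_ge0 opprD addrA subrr add0r oppr_ge0 leNgt x0 //.
Qed.
End Alg.

Theorem mainTheorem15 (K : realFieldType) (kappa : Type) :
  ~ archimedean_field K -> cantor_complete K kappa -> card_le kappa K.
Proof.
  move=> hna hc. apply: NNPP => hle.
  have [H HH] : exists H : K, @inf K H.
  { apply: NNPP => h. apply: hna => x. apply: notinf => hx. apply: h; eauto. }
  have hKk : card_le K kappa.
  { case: (comparable kappa K) => [[f hf]|[g hg]].
    - by exfalso; apply: hle; exists f.
    - by exists g. }
  apply: (@fam_empty K H).
  apply: hc => //. exact: (@fab K H HH). exact: fam_fip.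
Qed.
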